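(* Let $f:\mathbb{R}^n\to\mathbb{R}$ be differentiable, $\mu$-strongly convex, with $L$-Lipschitz gradient $\nabla f$, and let $x^*$ be its unique minimizer. Let $\mathcal{E}^t$ denote the event $\|\nabla f(x^t)\|_\infty\le\eta$. If $x\in\mathbb{R}^n$ satisfies $\|x-x^*\|_2>\frac{L\alpha\sqrt{n}}{2\mu}$, then the iterate $x^{t+1}$ of Markov gradient descent satisfies $$\mathbb{E}\left[\|x^{t+1}-x^*\|_2^2\,\middle|\,x^t=x,\mathcal{E}^t\right]<\|x-x^*\|_2^2 .$$
   Context: A differentiable $f$ is $\mu$-strongly convex if $\langle\nabla f(x)-\nabla f(y),x-y\rangle\ge\mu\|x-y\|_2^2$ for all $x,y$. Markov gradient descent (MGD) with lattice resolution $\alpha>0$ and normalizer $\eta>0$: start at $x^0\in\alpha\mathbb{Z}^n$; at step $t$, for each coordinate $i$, conditionally on $x^t$, $\Delta^t_i\in\{0,1\}$ is Bernoulli with $\mathbb{P}[\Delta^t_i=1\mid x^t]=\min(|\partial_i f(x^t)|/\eta,1)$, and $x^{t+1}_i=x^t_i-\alpha\,\mathrm{sgn}(\partial_i f(x^t))\Delta^t_i$. *)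

(* Defs.v *)
From HB Require Import structures.
From mathcomp Require Import all_boot all_order all_algebra.
From mathcomp Require Import all_classical all_reals all_analysis.
Set Implicit Arguments. Unset Strict Implicit. Unset Printing Implicit Defensive.
Import Order.TTheory GRing.Theory Num.Theory.
Import numFieldNormedType.Exports.
Local Open Scope ring_scope.

Definition partial {R : realType} {n : nat} (f : 'rV[R]_n -> R) (i : 'I_n)
  (x : 'rV[R]_n) : R := derive f x (delta_mx 0 i).

Definition grad {R : realType} {n : nat} (f : 'rV[R]_n -> R) (x : 'rV[R]_n)
  : 'rV[R]_n := \row_i partial f i x.

Definition dotv {R : realType} {n : nat} (u v : 'rV[R]_n) : R :=
  \sum_i u 0 i * v 0 i.
Definition norm2 {R : realType} {n : nat} (v : 'rV[R]_n) : R :=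
  Num.sqrt (\sum_i v 0 i ^+ 2).
Definition norm_inf_le {R : realType} {n : nat} (v : 'rV[R]_n) (c : R) : Prop :=
  forall i, `|v 0 i| <= c.

Definition strongly_convex {R : realType} {n : nat} (mu : R)
  (f : 'rV[R]_n -> R) : Prop :=
  forall x y, dotv (grad f x - grad f y) (x - y) >= mu * norm2 (x - y) ^+ 2.

Definition lipschitz_grad {R : realType} {n : nat} (L : R)
  (f : 'rV[R]_n -> R) : Prop :=
  forall x y, norm2 (grad f x - grad f y) <= L * norm2 (x - y).

(* One step of Markov gradient descent from x^t = x, with coin outcome
   D : {ffun 'I_n -> bool} (D i = true means Delta_i = 1). *)
Definition mgd_prob {R : realType} {n : nat} (f : 'rV[R]_n -> R) (eta : R)
  (x : 'rV[R]_n) (i : 'I_n) : R := Num.min (`|partial f i x| / eta) 1.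

Definition mgd_next {R : realType} {n : nat} (f : 'rV[R]_n -> R) (alpha : R)
  (x : 'rV[R]_n) (D : {ffun 'I_n -> bool}) : 'rV[R]_n :=
  \row_i (x 0 i - alpha * Num.sg (partial f i x) * (D i)%:R).

Definition mgd_weight {R : realType} {n : nat} (f : 'rV[R]_n -> R) (eta : R)
  (x : 'rV[R]_n) (D : {ffun 'I_n -> bool}) : R :=
  \prod_i (if D i then mgd_prob f eta x i else 1 - mgd_prob f eta x i).

(* E[ g(x^{t+1}) | x^t = x ] *)
Definition mgd_expect {R : realType} {n : nat} (f : 'rV[R]_n -> R)
  (alpha eta : R) (x : 'rV[R]_n) (g : 'rV[R]_n -> R) : R :=
  \sum_(D : {ffun 'I_n -> bool}) mgd_weight f eta x D * g (mgd_next f alpha x D).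

(* Main.v *)
Require Import Defs.
From HB Require Import structures.
From mathcomp Require Import all_boot all_order all_algebra.
From mathcomp Require Import all_classical all_reals all_analysis.
Import Order.TTheory GRing.Theory Num.Theory.
Import numFieldNormedType.Exports.
Local Open Scope ring_scope.
From mathcomp Require Import ring lra.
Lemma grad_min0 (R : realType) (n : nat) (f : 'rV[R]_n -> R) (xs : 'rV[R]_n) :
  (forall y, differentiable f y) -> (forall y, f xs <= f y) -> grad f xs = 0.
Proof.
move=> df fmin; apply/rowP => i; rewrite !mxE /partial.
set e : 'rV[R]_n := delta_mx 0 i.
pose h := fun t : R => f (t *: e + xs).
have -> : derive f xs e = derive h 0 1.
  rewrite /derive /h /= scale0r add0r; idtac.
  by under [in RHS]eq_fun => t do rewrite addr0 [_%:A]mulr1.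
have hd : forall t, derivable h t 1.
  move=> t; apply: diff_derivable; rewrite /h.
  apply: (@differentiable_comp _ _ _ _ (fun t : R => t *: e + xs) f) => //.
have c : (0:R) \in `](-1), 1[%R by rewrite in_itv /= ltrN10 ltr01.
have le11 : (-1 : R) <= 1 by rewrite (le_trans (lerN10 _)) ?ler01.
have hmin : forall t, t \in `](-1), 1[%R -> h 0 <= h t.
  by move=> t _; rewrite /h scale0r add0r.
by case: (@derive1_at_min R h (-1) 1 0 le11 (fun t _ => hd t) c hmin).
Qed.
Lemma expect_sep (R : comNzRingType) n (w h : 'I_n -> bool -> R) :
 (forall i, w i true + w i false = 1) ->
 \sum_(D : {ffun 'I_n -> bool}) (\prod_i w i (D i)) * (\sum_i h i (D i)) =
 \sum_i (w i true * h i true + w i false * h i false).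
Proof.
move=> w1.
under eq_bigr do rewrite mulr_sumr.
rewrite exchange_big /=; apply: eq_bigr => i _.
pose F j b := if j == i then w j b * h j b else w j b.
transitivity (\sum_(D : {ffun 'I_n -> bool}) \prod_j F j (D j)).
  apply: eq_bigr => D _.
  rewrite (bigD1 i) //= (bigD1 i (P := predT)) //= /F eqxx.
  rewrite [X in _ = _ * X](eq_bigr (fun j => w j (D j))); last first.
    by move=> j /negbTE ->.
  by rewrite mulrAC.
rewrite -(bigA_distr_bigA F) (bigD1 i) //= [X in _ * X]big1 ?mulr1.
  by rewrite big_bool /F eqxx.
by move=> j /negbTE ji; rewrite big_bool /F ji; apply: w1.
Qed.
Lemma cs_sq (R : realFieldType) n (a : 'I_n -> R) :
  (\sum_i a i) ^+ 2 <= n%:R * \sum_i a i ^+ 2.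
Proof.
have H : 0 <= \sum_i \sum_j (a i - a j) ^+ 2.
  by apply: sumr_ge0 => i _; apply: sumr_ge0 => j _; apply: sqr_ge0.
have E : \sum_i \sum_j (a i - a j) ^+ 2 =
   2 * (n%:R * \sum_i a i ^+ 2) - 2 * (\sum_i a i) ^+ 2.
  transitivity (\sum_i \sum_j (a i ^+ 2 + a j ^+ 2 - 2 * (a i * a j))).
    by apply: eq_bigr => i _; apply: eq_bigr => j _; ring.
  under eq_bigr do rewrite big_split /= sumrN big_split /= sumr_const card_ord -mulr_sumr.
  rewrite big_split /= sumrN big_split /= sumrMnl sumr_const card_ord.
  rewrite [X in _ - X](eq_bigr (fun i => 2 * (a i * \sum_j a j))); last by move=> i _; rewrite -mulr_sumr.
  rewrite -mulr_sumr -mulr_suml -mulr_natl.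
  set A := \sum_(i < n) a i ^+ 2. set B := \sum_(i < n) a i. ring.
lra.
Qed.

Theorem corollary6p5 (R : realType) (n : nat) (f : 'rV[R]_n -> R)
  (mu L alpha eta : R) (xstar x : 'rV[R]_n) :
  0 < mu -> 0 < alpha -> 0 < eta ->
  (forall y, differentiable f y) ->
  strongly_convex mu f ->
  lipschitz_grad L f ->
  (forall y, f xstar <= f y) ->
  (* the event E^t given x^t = x : ||grad f(x)||_oo <= eta *)
  norm_inf_le (grad f x) eta ->
  norm2 (x - xstar) > L * alpha * Num.sqrt (n%:R) / (2 * mu) ->
  mgd_expect f alpha eta x (fun y => norm2 (y - xstar) ^+ 2)
    < norm2 (x - xstar) ^+ 2.
Proof.
move=> mu0 al0 eta0 df sc lip xmin ginf hyp.
have g0 := @grad_min0 R n f xstar df xmin.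
have n2sq : forall v : 'rV[R]_n, norm2 v ^+ 2 = \sum_i v 0 i ^+ 2.
  by move=> v; rewrite /norm2 sqr_sqrtr // sumr_ge0 // => i _; rewrite sqr_ge0.
set d := x - xstar.
set g := grad f x.
have gE : forall i, partial f i x = g 0 i by move=> i; rewrite /g /grad mxE.
set p := fun i => `|g 0 i| / eta.
have pE : forall i, mgd_prob f eta x i = p i.
  move=> i; rewrite /mgd_prob gE; apply: min_l.
  by rewrite ler_pdivrMr // mul1r; apply: ginf.
pose w := fun i (b : bool) => if b then p i else 1 - p i.
pose h := fun i (b : bool) => (d 0 i - alpha * Num.sg (g 0 i) * b%:R) ^+ 2.
have E1 : mgd_expect f alpha eta x (fun y => norm2 (y - xstar) ^+ 2) =
  \sum_(D : {ffun 'I_n -> bool}) (\prod_i w i (D i)) * \sum_i h i (D i).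
  rewrite /mgd_expect; apply: eq_bigr => D _; rewrite /mgd_weight n2sq; congr (_ * _).
    by apply: eq_bigr => i _; rewrite /w !pE.
  by apply: eq_bigr => i _; rewrite /h /d !mxE gE; congr (_ ^+ 2); ring.
rewrite E1 (@expect_sep _ n w h); last by move=> i; rewrite /w; ring.
rewrite /w /h /=.
have T : forall i, p i * (d 0 i - alpha * Num.sg (g 0 i) * 1) ^+ 2 +
      (1 - p i) * (d 0 i - alpha * Num.sg (g 0 i) * 0) ^+ 2 =
   d 0 i ^+ 2 - alpha / eta * (2 * (g 0 i * d 0 i) - alpha * `|g 0 i|).
  move=> i; rewrite /p.
  have k1 : Num.sg (g 0 i) * `|g 0 i| = g 0 i := mulr_sg_norm _.
  have k2 : Num.sg (g 0 i) * g 0 i = `|g 0 i| by rewrite -normrEsg.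
  transitivity (d 0 i ^+ 2 - 2 * alpha * d 0 i * ((Num.sg (g 0 i) * `|g 0 i|) / eta)
     + alpha ^+ 2 * ((Num.sg (g 0 i) * (Num.sg (g 0 i) * `|g 0 i|)) / eta)).
    ring.
  rewrite k1 k2; ring.
under eq_bigr do rewrite T.
rewrite sumrB -mulr_sumr.
have -> : \sum_i (2 * (g 0 i * d 0 i) - alpha * `|g 0 i|) =
    2 * dotv g d - alpha * \sum_i `|g 0 i|.
  by rewrite sumrB -!mulr_sumr.
rewrite n2sq.
set S := \sum_i `|g 0 i|.
set N := norm2 d.
have c0 : 0 < alpha / eta by rewrite divr_gt0.
have Dge : mu * N ^+ 2 <= dotv g d.
  by have := sc x xstar; rewrite g0 subr0.
have gle : norm2 g <= L * N.
  by have := lip x xstar; rewrite g0 subr0.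
have Sle : S <= Num.sqrt n%:R * norm2 g.
  have S0 : 0 <= S by apply: sumr_ge0 => i _.
  rewrite /norm2 -sqrtrM // -[S]ger0_norm // -sqrtr_sqr ler_sqrt; last first.
    by rewrite mulr_ge0 // sumr_ge0 // => i _; rewrite sqr_ge0.
  have := @cs_sq R n (fun i => `|g 0 i|).
  have E : \sum_i `|g 0 i| ^+ 2 = \sum_i g 0 i ^+ 2.
    by apply: eq_bigr => i _; rewrite real_normK // num_real.
  by rewrite E => H; exact: H.
have Lsq : 0 <= L * Num.sqrt n%:R.
  have := lip (const_mx 1) 0; rewrite subr0.
  have -> : norm2 (const_mx 1 : 'rV[R]_n) = Num.sqrt n%:R.
    rewrite /norm2; congr Num.sqrt; under eq_bigr do rewrite mxE expr1n.
    by rewrite sumr_const card_ord.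
  by apply: le_trans; apply: sqrtr_ge0.
have N0 : 0 < N.
  apply: le_lt_trans hyp.
  have La : 0 <= L * alpha * Num.sqrt n%:R by rewrite mulrAC mulr_ge0 // ltW.
  by rewrite divr_ge0 // mulr_ge0 // ltW.
have Hh : L * alpha * Num.sqrt n%:R < N * (2 * mu).
  by rewrite -ltr_pdivrMr // mulr_gt0.
have key : 0 < 2 * dotv g d - alpha * S.
  have h1 : alpha * S <= alpha * (Num.sqrt n%:R * (L * N)).
    rewrite ler_pM2l //; apply: le_trans Sle _; rewrite ler_wpM2l // sqrtr_ge0.
  have h2 : L * alpha * Num.sqrt n%:R * N < N * (2 * mu) * N by rewrite ltr_pM2r.
  have e1 : alpha * (Num.sqrt n%:R * (L * N)) = L * alpha * Num.sqrt n%:R * N by ring.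
  have e2 : N * (2 * mu) * N = 2 * (mu * N ^+ 2) by ring.
  rewrite e1 in h1; rewrite e2 in h2; lra.
have := mulr_gt0 c0 key; lra.
Qed.
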